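(* Let $\lambda$ be a partition with at most $n$ parts and $b=x_1\otimes\cdots\otimes x_n\in E_\lambda$. Let $Z_b$ be the set of $i\in\{1,\dots,n-1\}$ such that exactly one of $x_i,x_{i+1}$ is barred. Then $$\sum_{i\in Z_b}(n-i)\bigl(1-2H(x_i\otimes x_{i+1})\bigr)=\frac{n-|\lambda|}{2}.$$
   Context: Let $\mathcal{C}_n$ be the ordered alphabet $1<2<\cdots<n<\bar n<\overline{n-1}<\cdots<\bar1$; letters $k$ are unbarred, letters $\bar k$ barred; $\mathrm{wt}(k)=\varepsilon_k$, $\mathrm{wt}(\bar k)=-\varepsilon_k$ ($\varepsilon_k$ standard basis of $\mathbb{Z}^n$). $E_\lambda$ is the set of words $x_1\otimes\cdots\otimes x_n$ over $\mathcal{C}_n$ such that each partial sum $w_i=\sum_{j\le i}\mathrm{wt}(x_j)$ ($1\le i\le n$) is a partition (weakly decreasing, nonnegative) and $w_n=\lambda$. $|\lambda|=\sum\lambda_i$. For letters $x,y$, $H(x\otimes y)=1$ if $x\ge y$ and $0$ if $x<y$. *)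

(* Defs.v *)
From mathcomp Require Import all_boot all_order all_algebra.
Set Implicit Arguments. Unset Strict Implicit. Unset Printing Implicit Defensive.
Import Order.TTheory GRing.Theory Num.Theory.

(* Letters of the alphabet C_n: [Unb k] is k, [Bar k] is \bar k (1 <= k <= n). *)
Inductive letter := Unb of nat | Bar of nat.

Definition barred (x : letter) : bool := if x is Bar _ then true else false.

Definition letter_index (x : letter) : nat := match x with Unb k => k | Bar k => k end.

Definition valid_letter (n : nat) (x : letter) : bool :=
  (1 <= letter_index x <= n)%N.

Definition letter_lt (x y : letter) : bool :=
  match x, y with
  | Unb i, Unb j => (i < j)%N
  | Unb _, Bar _ => true
  | Bar _, Unb _ => false
  | Bar i, Bar j => (j < i)%N
  end.

Definition Hfun (x y : letter) : int := if letter_lt x y then 0 else 1.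

Definition wt_coord (x : letter) (k : nat) : int :=
  match x with
  | Unb j => Posz (j == k)
  | Bar j => - Posz (j == k)
  end%R.

Definition dflt_letter : letter := Unb 0.

Definition partial_wt (x : seq letter) (i k : nat) : int :=
  (\sum_(j < i) wt_coord (nth dflt_letter x j) k)%R.

Definition is_partition_vec (n : nat) (v : nat -> int) : Prop :=
  (forall k, (1 <= k < n)%N -> (v k.+1 <= v k)%R) /\ (0 <= v n)%R.

Definition partition_atmost (n : nat) (lam : seq nat) : Prop :=
  sorted geq lam /\ 0 \notin lam /\ (size lam <= n)%N.

Definition in_E (n : nat) (lam : seq nat) (x : seq letter) : Prop :=
  size x = n /\ all (valid_letter n) x /\
  (forall i, (1 <= i <= n)%N -> is_partition_vec n (partial_wt x i)) /\
  (forall k, (1 <= k <= n)%N -> partial_wt x n k = Posz (nth 0 lam k.-1)).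

(* Main.v *)
Require Import Defs.
From mathcomp Require Import all_boot all_order all_algebra.
From mathcomp Require Import zify ring.
Import Order.TTheory GRing.Theory Num.Theory.
Local Open Scope ring_scope.

Lemma telI (f : nat -> int) m :
  \sum_(1 <= i < m.+1) (f i.-1 - f i) = f 0%N - f m.
Proof.
elim: m => [|m IH]; first by rewrite big_geq // subrr.
rewrite big_nat_recr //= IH; ring.
Qed.

Lemma tele (f : nat -> int) m :
  \sum_(1 <= i < m.+1) (Posz (m.+1 - i)%N * (f i.-1 - f i)) =
  (m.+1)%:Z * f 0%N - \sum_(0 <= j < m.+1) f j.
Proof.
elim: m => [|m IH].
  by rewrite big_geq // big_nat1; ring.
rewrite (eq_big_nat _ _ (F2 := fun i => Posz (m.+1 - i)%N * (f i.-1 - f i) + (f i.-1 - f i))); last first.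
  move=> i /andP[_ hi]; rewrite subSn //; rewrite -addn1 PoszD; ring.
rewrite big_split /= big_nat_recr //= subnn mul0r addr0 IH telI.
rewrite (big_nat_recr _ _ _ (isT : (0 <= m.+1)%N)) /=.
rewrite -[m.+2]addn1 PoszD; ring.
Qed.

Definition uf (x : seq letter) (j : nat) : int :=
  if barred (nth dflt_letter x j) then 0 else 1.

Lemma cond_sum (x : seq letter) n :
  (\sum_(1 <= i < n | barred (nth dflt_letter x i.-1) != barred (nth dflt_letter x i))
      (Posz (n - i) * (1 - 2 * Hfun (nth dflt_letter x i.-1) (nth dflt_letter x i))))
  = \sum_(1 <= i < n) (Posz (n - i) * (uf x i.-1 - uf x i)).
Proof.
rewrite big_mkcond; apply: eq_bigr => i _; rewrite /uf.
case: (nth dflt_letter x i.-1) => a; case: (nth dflt_letter x i) => b;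
  rewrite /Hfun /=; ring.
Qed.

Lemma part_nonneg n v : is_partition_vec n v -> forall d, (d < n)%N -> 0 <= v (n - d)%N.
Proof.
case=> hdec hn; elim=> [|d IH] hd; first by rewrite subn0.
have h1 : (1 <= n - d.+1 < n)%N by apply/andP; split; lia.
apply: le_trans (IH (ltnW hd)) _.
have -> : (n - d = (n - d.+1).+1)%N by lia.
exact: hdec.
Qed.

Lemma u0 n lam x : in_E n.+1 lam x -> uf x 0 = 1.
Proof.
case=> hs [hv [hp _]].
have hpv := hp 1%N (isT : (1 <= 1 <= n.+1)%N).
have hx0 : valid_letter n.+1 (nth dflt_letter x 0).
  by apply: (all_nthP dflt_letter hv); rewrite hs.
have := @part_nonneg _ _ hpv (n.+1 - letter_index (nth dflt_letter x 0))%N.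
rewrite /uf /partial_wt big_ord1 /=.
move: hx0; case: (nth dflt_letter x 0) => b //= /andP [hb1 hb2]; simpl in hb1, hb2.
have -> : (n.+1 - (n.+1 - b) = b)%N by lia.
rewrite /= eqxx /= => /(_ ltac:(lia)).
by [].
Qed.

Lemma sum_eq1 n b : (1 <= b <= n)%N -> \sum_(1 <= k < n.+1) Posz (b == k) = 1.
Proof.
move=> hb.
rewrite (bigD1_seq b) /=; [|by rewrite mem_index_iota; lia|exact: iota_uniq].
rewrite eqxx big1 ?addr0 // => k /negbTE; by rewrite eq_sym => ->.
Qed.

Lemma sum_letter n a : valid_letter n a ->
  \sum_(1 <= k < n.+1) wt_coord a k = (if barred a then -1 else 1).
Proof.
case: a => b /= hb.
  exact: sum_eq1.
by rewrite sumrN sum_eq1.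
Qed.

Lemma sumn_lam n lam x : partition_atmost n lam -> in_E n lam x ->
  Posz (sumn lam) = \sum_(0 <= j < n) (2 * uf x j - 1).
Proof.
case=> _ [_ hsz] [hs [hv [_ hl]]].
have e1 : Posz (sumn lam) = \sum_(1 <= k < n.+1) partial_wt x n k.
  rewrite (eq_big_nat _ _ (F2 := fun k => Posz (nth 0%N lam k.-1))); last first.
    by move=> k hk; rewrite hl.
  rewrite big_add1 /= sumnE (big_nth 0%N) (big_morph Posz PoszD (erefl (Posz 0))).
  rewrite [RHS](big_cat_nat _ (n := size lam)) //= [X in _ = _ + X]big1_seq ?addr0 //.
  by move=> i /andP [_]; rewrite mem_index_iota => /andP [hi _]; rewrite nth_default.
rewrite e1 /partial_wt exchange_big /= big_mkord; apply: eq_bigr => j _.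
rewrite sum_letter; last by apply: (all_nthP dflt_letter hv); rewrite hs.
by rewrite /uf; case: barred.
Qed.

Theorem mainTheorem11 (n : nat) (lam : seq nat) (x : seq letter) :
  partition_atmost n lam -> in_E n lam x ->
  ((\sum_(1 <= i < n | barred (nth dflt_letter x i.-1) != barred (nth dflt_letter x i))
      (Posz (n - i) * (1 - 2 * Hfun (nth dflt_letter x i.-1) (nth dflt_letter x i)))%R)%:~R
   = ((n%:R - (sumn lam)%:R) / 2 : rat))%R.
Proof.
move=> hp he; rewrite cond_sum.
have hs := @sumn_lam _ _ _ hp he.
case: n hp he hs => [|m] hp he hs.
  by rewrite big_geq // in hs; rewrite big_geq // -[(sumn lam)%:R]/((Posz (sumn lam))%:~R : rat) hs /= mul0r.

rewrite (tele (uf x)) (@u0 _ _ _ he).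
rewrite big_split /= sumrN -mulr_sumr sumr_const_nat subn0 in hs.
rewrite -[(sumn lam)%:R]/((Posz (sumn lam))%:~R : rat) hs.
set S := \sum_(0 <= j < m.+1) uf x j.
rewrite !(intrD, intrM, intrN, intrB) /=.

rewrite natz.
rewrite -[(Posz m.+1)%:~R]/(m.+1%:R : rat).
by field.
Qed.
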